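(* Let $V\subset\mathbb{R}^d$ be a finite non-degenerate antichain and let $p\in S_V$ be a characteristic point. Then every minimum $v\in D_p$ is contained in some minimal generating set of $p$.
   Context: For $x,y\in\mathbb{R}^d$, $x\le y$ (dominance order) means $x_i\le y_i$ for all $i$; $y\rhd x$ means $y_i>x_i$ for all $i$; $y\rhd_i x$ means $y_i=x_i$ and $y_j>x_j$ for all $j\neq i$. The join is the componentwise maximum. $V\subset\mathbb{R}^d$ is a finite antichain in the dominance order (elements are called minima). The orthogonal surface $S_V$ is the topological boundary of $\langle V\rangle=\{x: x\ge v\text{ for some }v\in V\}$; equivalently $p\in S_V$ iff there is $v\in V$ with $v\le p$ and no $w\in V$ with $p\rhd w$. For $p\in S_V$, $D_p=\{v\in V:v\le p\}$. A generating set for $p\in S_V$ is a nonempty $G\subseteq D_p$ with $\bigvee G=p$; it is minimal if $\bigvee(G\setminus\{v\})\neq p$ for every $v\in G$. Flats: $U_i(v)=\{p\in S_V: p\rhd_i v\}$; for $v,w\in V$ put $v\sim_i w$ iff $U_i(v)\cap U_i(w)\neq\emptyset$, and let $\sim_i^c$ be the reflexive–transitive closure; the $i$-flat of $v$ is $F_i(v)=\overline{\bigcup_{w\sim_i^c v}U_i(w)}$, and an $i$-flat is any set of this form. A characteristic point is a point of $S_V$ that lies in some $i$-flat for every $i\in\{1,\dots,d\}$. $V$ is degenerate if there exist a characteristic point $p$, minima $x,u,v\in D_p$ and coordinates $i\neq j$ with $u_i<v_i=x_i=p_i$ and $v_j<u_j=x_j=p_j$; otherwise non-degenerate. *)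

(* Defs.v *)
From HB Require Import structures.
From mathcomp Require Import all_boot all_order all_algebra.
From mathcomp Require Import reals.
From Stdlib Require Import Relation_Operators.
Set Implicit Arguments. Unset Strict Implicit. Unset Printing Implicit Defensive.
Import Order.TTheory GRing.Theory Num.Theory.
Local Open Scope ring_scope.

Section OrthSurf.
Variables (R : realType) (d : nat).
Notation pt := {ffun 'I_d -> R}.

Definition dle (x y : pt) : Prop := forall i, x i <= y i.
Definition drhd (y x : pt) : Prop := forall i, x i < y i.
Definition drhdi (i : 'I_d) (y x : pt) : Prop :=
  y i = x i /\ forall j, j != i -> x j < y j.

Definition ptmax (x y : pt) : pt := [ffun i => Num.max (x i) (y i)].

Definition is_join (G : seq pt) (p : pt) : Prop :=
  match G with
  | [::] => False
  | g :: gs => foldr ptmax g gs = p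
  end.

Definition antichain (V : seq pt) : Prop :=
  forall v w, v \in V -> w \in V -> dle v w -> v = w.

Definition onS (V : seq pt) (p : pt) : Prop :=
  (exists v, v \in V /\ dle v p) /\ ~ (exists w, w \in V /\ drhd p w).

Definition inD (V : seq pt) (p v : pt) : Prop := v \in V /\ dle v p.

(* generating sets (finite sets modelled by duplicate-free sequences) *)
Definition generating (V : seq pt) (p : pt) (G : seq pt) : Prop :=
  uniq G /\ (forall v, v \in G -> inD V p v) /\ is_join G p.

(* minimal: removing any element breaks the join (join of the empty set is never p) *)
Definition min_generating (V : seq pt) (p : pt) (G : seq pt) : Prop :=
  generating V p G /\ forall v, v \in G -> ~ is_join (rem v G) p.

(* topological closure in R^d (Euclidean topology, via the sup-distance) *)
Definition closure (A : pt -> Prop) (x : pt) : Prop :=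
  forall e : R, 0 < e -> exists y, A y /\ forall i, `|x i - y i| < e.

Definition Ui (V : seq pt) (i : 'I_d) (v : pt) (p : pt) : Prop :=
  onS V p /\ drhdi i p v.

Definition simi (V : seq pt) (i : 'I_d) (v w : pt) : Prop :=
  v \in V /\ w \in V /\ exists p, Ui V i v p /\ Ui V i w p.

Definition flat (V : seq pt) (i : 'I_d) (v : pt) : pt -> Prop :=
  closure (fun p => exists w, w \in V /\ clos_refl_trans pt (simi V i) w v /\ Ui V i w p).

Definition characteristic (V : seq pt) (p : pt) : Prop :=
  onS V p /\ forall i : 'I_d, exists v, v \in V /\ flat V i v p.

Definition degenerate (V : seq pt) : Prop :=
  exists p x u v (i j : 'I_d),
    [/\ characteristic V p, inD V p x, inD V p u, inD V p v & i != j] /\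
    (u i < v i /\ v i = x i /\ x i = p i) /\ (v j < u j /\ u j = x j /\ x j = p j).

End OrthSurf.

(* Main.v *)
Require Import Defs.
From HB Require Import structures.
From mathcomp Require Import all_boot all_order all_algebra.
From mathcomp Require Import reals.
From mathcomp Require Import lra zify.
From Stdlib Require Import Classical.
Set Implicit Arguments. Unset Strict Implicit. Unset Printing Implicit Defensive.
Import Order.TTheory GRing.Theory Num.Theory.
Local Open Scope ring_scope.

Section Helpers.
Variables (R : realType) (d : nat).
Local Notation pt := {ffun 'I_d -> R}.

Lemma eps_seq (T : eqType) (s : seq T) (Q : T -> R -> Prop) :
  (forall x e e', 0 < e' -> e' <= e -> Q x e -> Q x e') ->
  (forall x, x \in s -> exists e, 0 < e /\ Q x e) ->
  exists e, 0 < e /\ forall x, x \in s -> Q x e.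
Proof.
move=> Qm; elim: s => [|x s IH] H.
  by exists 1; split => //.
have [e1 [e1p Q1]] := H x (mem_head _ _).
have [e2 [e2p Q2]] : exists e, 0 < e /\ forall y, y \in s -> Q y e.
  by apply: IH => y ys; apply: H; rewrite inE ys orbT.
case: (leP e1 e2) => He.
- exists e1; split => // y; rewrite inE => /orP [/eqP->//|ys].
  exact: (Qm y e2 e1 e1p He (Q2 y ys)).
- exists e2; split => // y; rewrite inE => /orP [/eqP->|ys]; last exact: Q2.
  exact: (Qm x e1 e2 e2p (ltW He) Q1).
Qed.

Lemma join_ge (g : pt) gs : forall a i, a \in g :: gs -> a i <= (foldr (@ptmax R d) g gs) i.
Proof.
elim: gs => [|h t IH] a i /=.
  by rewrite inE => /eqP->.
rewrite ffunE le_max.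
rewrite !inE => /orP [/eqP->|/orP [/eqP->|Ha]].
- by rewrite (IH g i (mem_head _ _)) orbT.
- by rewrite lexx.
- by rewrite (IH a i) ?orbT // inE Ha orbT.
Qed.

Lemma join_att (g : pt) gs i : exists a, a \in g :: gs /\ a i = (foldr (@ptmax R d) g gs) i.
Proof.
elim: gs => [|h t [a [Ha Hai]]] /=.
  by exists g; rewrite mem_head.
rewrite ffunE maxEle; case: ifP => _.
- exists a; split => //; move: Ha; rewrite !inE => /orP [->|->]; rewrite ?orbT //.
- by exists h; rewrite !inE eqxx orbT.
Qed.

Lemma is_join_att (G : seq pt) p : is_join G p -> forall i, exists a, a \in G /\ a i = p i.
Proof.
case: G => [//|g gs] /= <- i; exact: join_att.
Qed.

Lemma is_join_le (G : seq pt) p : is_join G p -> forall a, a \in G -> dle a p.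
Proof.
case: G => [//|g gs] /= <- a Ha i; exact: join_ge.
Qed.

Lemma is_joinI (G : seq pt) p : G != [::] -> (forall a, a \in G -> dle a p) ->
  (forall i, exists a, a \in G /\ a i = p i) -> is_join G p.
Proof.
case: G => [//|g gs] _ /= Hle Hat; apply/ffunP => i.
apply/eqP; rewrite eq_le; apply/andP; split.
- have [a [Ha <-]] := join_att g gs i; exact: Hle.
- have [a [Ha <-]] := Hat i; exact: join_ge.
Qed.

Lemma count_le_in (T : eqType) (P Q : pred T) (s : seq T) :
  (forall x, x \in s -> P x -> Q x) -> (count P s <= count Q s)%N.
Proof.
elim: s => [|x s IH] Hs //=.
have Hs' : forall z, z \in s -> P z -> Q z by move=> z zs; apply: Hs; rewrite inE zs orbT.
have := IH Hs'.
case Px: (P x); first by rewrite (Hs x (mem_head _ _) Px) /=; lia.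
case: (Q x) => /=; lia.
Qed.

Lemma count_lt (T : eqType) (P Q : pred T) (s : seq T) :
  (forall x, x \in s -> P x -> Q x) -> (exists x, x \in s /\ Q x /\ ~~ P x) ->
  (count P s < count Q s)%N.
Proof.
elim: s => [|x s IH] Hs [y [Hy [Qy Py]]] //=.
have Hs' : forall z, z \in s -> P z -> Q z by move=> z zs; apply: Hs; rewrite inE zs orbT.
move: Hy; rewrite inE => /orP [/eqP Eq|ys].
- subst y; rewrite Qy (negbTE Py) /= add0n add1n ltnS.
  exact: count_le_in.
- have := IH Hs' (ex_intro _ y (conj ys (conj Qy Py))).
  case Px: (P x); first by rewrite (Hs x (mem_head _ _) Px).
  case: (Q x) => /=; lia.
Qed.

Lemma flat_wit (V : seq pt) p i : characteristic V p -> exists w, w \in V /\ w i = p i /\ dle w p /\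
  forall y, y \in V -> dle y p -> y i < p i -> exists j, y j = p j /\ w j < p j.
Proof.
move=> [HS Hfl]; have [v0 [_ Hcl]] := Hfl i.
apply: NNPP => Hno.
have [e [ep He]] : exists e, 0 < e /\ forall w, w \in V ->
    forall q : pt, (forall j, `|p j - q j| < e) -> ~ Ui V i w q.
  apply: (eps_seq (Q := fun w e => forall q : pt, (forall j, `|p j - q j| < e) -> ~ Ui V i w q)).
  - move=> w e e' e'p le H q Hq; apply: H => j; exact: lt_le_trans (Hq j) le.
  - move=> w wV.
    case: (eqVneq (w i) (p i)) => Hwi; last first.
      exists `|w i - p i|; split; first by rewrite normr_gt0 subr_eq0.
      move=> q Hq [_ [Hqi _]]; have := Hq i; rewrite Hqi distrC ltxx //.
    case: (classic (dle w p)) => Hdle; last first.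
      have [j Hj] : exists j, ~ w j <= p j by apply: not_all_ex_not.
      have Hj' : p j < w j by rewrite ltNge; apply/negP.
      exists (w j - p j); split; first by rewrite subr_gt0.
      move=> q Hq [_ [Hqi Hqj]].
      case: (eqVneq j i) => [Eji|ji]; first by move: Hj'; rewrite Eji Hwi ltxx.
      have := Hqj j ji; have := Hq j; rewrite ltr_norml => /andP[? ?] ?; lra.
    have : ~ (forall y, y \in V -> dle y p -> y i < p i -> exists j, y j = p j /\ w j < p j).
      by move=> H; apply: Hno; exists w.
    move/not_all_ex_not => [y Hy].
    have [yV Hy1] := imply_to_and _ _ Hy.
    have [ydle Hy2] := imply_to_and _ _ Hy1.
    have [yi Hnj] := imply_to_and _ _ Hy2.
    have [e [ep He]] : exists e, 0 < e /\ forall j, j \in enum 'I_d -> y j < p j -> e <= p j - y j.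
      apply: (eps_seq (Q := fun j e => y j < p j -> e <= p j - y j)).
        by move=> j e e' _ le H h; exact: le_trans le (H h).
      move=> j _; case: (ltP (y j) (p j)) => h.
        by exists (p j - y j); split; [rewrite subr_gt0 | ].
      by exists 1; split => // h'; move: (lt_le_trans h' h); rewrite ltxx.
    exists e; split => //; move=> q Hq [HSq [Hqi Hqj]]; apply: HSq.2; exists y; split => // j.
    case: (ltP (y j) (p j)) => h.
      have := He j (mem_enum _ _) h; have := Hq j; rewrite ltr_norml => /andP[? ?] ?; lra.
    have yj : y j = p j by apply/eqP; rewrite eq_le h (ydle j).
    have ji : j != i by apply/eqP => E; move: yi; rewrite -E yj ltxx.
    have wj : p j <= w j by rewrite leNgt; apply/negP => wlt; apply: Hnj; exists j.
    have := Hqj j ji; lra.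
have [q [[w [wV [_ Hu]]] Hq]] := Hcl e ep.
exact: He w wV q Hq Hu.
Qed.

Lemma minimize (V : seq pt) p (v : pt) k : forall n (G : seq pt), (size G <= n)%N -> uniq G ->
  (forall a, a \in G -> inD V p a) -> is_join G p -> v \in G ->
  (forall a, a \in G -> a != v -> a k < p k) ->
  exists G', min_generating V p G' /\ v \in G'.
Proof.
elim=> [|n IH] G Hs Hu HD Hj Hv Hk.
  by case: G Hs Hv Hu HD Hj Hk.
case: (classic (exists u, u \in G /\ is_join (rem u G) p)) => [[u [uG Hju]]|Hno]; last first.
  exists G; split => //; split; first by split.
  by move=> u uG Hj'; apply: Hno; exists u.
have uv : u != v.
  apply/eqP => E; rewrite E in Hju.
  have [a [aG ak]] := is_join_att Hju k.
  move: aG; rewrite (mem_rem_uniq _ Hu) inE => /andP [av aG].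
  by move: (Hk a aG av); rewrite ak ltxx.
apply: (IH (rem u G)).
- rewrite size_rem //; move: Hs; case: (size G) => //= m; lia.
- exact: rem_uniq.
- by move=> a aG; apply: HD; apply: mem_rem aG.
- exact: Hju.
- by rewrite (mem_rem_uniq _ Hu) inE eq_sym uv.
- by move=> a aG; apply: Hk; apply: mem_rem aG.
Qed.

Definition dleb (p a : pt) := [forall j, a j <= p j].
Lemma dlebP (p a : pt) : dle a p <-> dleb p a.
Proof. by split => [H|/forallP H]; [apply/forallP|]. Qed.

End Helpers.

Theorem corollary4p9 (R : realType) (d : nat) (V : seq {ffun 'I_d -> R}) :
  antichain V -> ~ degenerate V ->
  forall p : {ffun 'I_d -> R}, characteristic V p ->
  forall v, inD V p v ->
  exists G : seq {ffun 'I_d -> R}, min_generating V p G /\ v \in G.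
Proof.
move=> Hac Hnd p Hch v [vV vle].
have [k0 Hk0] : exists k0, v k0 == p k0.
  apply: NNPP => H; apply: Hch.1.2; exists v; split => // i.
  rewrite lt_neqAle vle andbT; apply/negP => E; apply: H; by exists i.
pose cnt k := count (fun a => dleb p a && (a k == p k)) V.
case: (arg_minnP cnt (P := fun k => v k == p k) Hk0) => k /eqP vk Hmin.
have Hchain : forall a, a \in V -> dle a p -> a k = p k -> forall k', v k' = p k' -> a k' = p k'.
  move=> a aV ale ak k' vk'; apply: NNPP => ak'.
  have ak'lt : a k' < p k' by rewrite lt_neqAle ale andbT; apply/eqP.
  have Hsub : forall b, b \in V -> dleb p b && (b k' == p k') -> dleb p b && (b k == p k).
    move=> b bV /andP[bd /eqP bk']; rewrite bd /=; apply/eqP; apply: NNPP => bk.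
    have bklt : b k < p k by rewrite lt_neqAle (proj2 (dlebP _ _) bd k) andbT; apply/eqP.
    have kk' : k != k' by apply/eqP => E; apply: ak'; rewrite -E.
    apply: Hnd; exists p, v, b, a, k, k'.
    split; first by split => //; split => //; apply/dlebP.
    split; split => //; try split => //; try lra.
    all: rewrite ?ak ?vk ?bk' ?vk' //.
  have := count_lt Hsub.
  have Hc : (cnt k' < cnt k)%N.
    apply: count_lt Hsub _; exists a; split => //.
    rewrite ak eqxx (proj1 (dlebP _ _) ale) /=; split => //.
    by apply/negP => /eqP.
  by have := Hmin k' (introT eqP vk'); lia.
have Hw : forall i, v i != p i -> exists w, w \in V /\ dle w p /\ w i = p i /\ w k != p k.
  move=> i vi.
  have [w [wV [wi [wle Hw]]]] := flat_wit i Hch.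
  have vilt : v i < p i by rewrite lt_neqAle vi vle.
  have [j [vj wj]] := Hw v vV vle vilt.
  exists w; split => //; split => //; split => //.
  apply/eqP => wk; by move: wj; rewrite (Hchain w wV wle wk j vj) ltxx.
pose G := v :: undup [seq a <- V | dleb p a && (a k != p k)].
apply: (@minimize _ _ V p v k (size G) G (leqnn _)).
- rewrite /G /= undup_uniq andbT mem_undup mem_filter vk eqxx /=; by rewrite andbF.
- move=> a; rewrite /G inE mem_undup mem_filter => /orP [/eqP->//|/andP[/andP[ad _] aV]].
  by split => //; apply/dlebP.
- apply: is_joinI => //.
  + move=> a; rewrite /G inE mem_undup mem_filter => /orP [/eqP->//|/andP[/andP[ad _] aV]].
    by apply/dlebP.
  + move=> i; case: (eqVneq (v i) (p i)) => vi.
      by exists v; rewrite mem_head.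
    have [w [wV [wle [wi wk]]]] := Hw i vi.
    exists w; split => //; rewrite /G inE mem_undup mem_filter wV wk andbT.
    by rewrite (proj1 (dlebP _ _) wle) orbT.
- exact: mem_head.
- move=> a; rewrite /G inE mem_undup mem_filter => /orP [/eqP->|/andP[/andP[ad ak] aV]] av.
    by rewrite eqxx in av.
  by rewrite lt_neqAle ak (proj2 (dlebP _ _) ad k).
Qed.
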